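(* Let $t$ be an $\mathrm{SL}_2$-tiling with $t_{jp}=1$. (i) If $t_{xy}=1$ for some $(x,y)$ with $x<j,\ y>p$, then either $t_{xp}=1$ for some $x<j$, or $t_{jy}=1$ for some $y>p$, but not both. (ii) If $t_{xy}=1$ for some $(x,y)$ with $x>j,\ y<p$, then either $t_{xp}=1$ for some $x>j$, or $t_{jy}=1$ for some $y<p$, but not both.
   Context: An $\mathrm{SL}_2$-tiling is a map $t:\mathbb{Z}\times\mathbb{Z}\to\{1,2,3,\dots\}$, $(i,j)\mapsto t_{ij}$, with $t_{ij}t_{i+1,j+1}-t_{i,j+1}t_{i+1,j}=1$ for all $i,j$. *)

(* Defs.v *)
From Stdlib Require Import ZArith.
Open Scope Z_scope.

(* An SL2-tiling: a map Z x Z -> {1,2,3,...} with every adjacent 2x2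
   determinant equal to 1.  We model values in Z with positivity. *)
Definition SL2_tiling (t : Z -> Z -> Z) : Prop :=
  (forall i j, 1 <= t i j) /\
  (forall i j, t i j * t (i+1) (j+1) - t i (j+1) * t (i+1) j = 1).

(* Main.v *)
Require Import Defs.
From Stdlib Require Import ZArith Lia Classical.
Open Scope Z_scope.

Definition cc (t : Z -> Z -> Z) (j p i : Z) := t i p * t j (p+1) - t i (p+1) * t j p.
Definition uu (t : Z -> Z -> Z) (j p m : Z) := t j p * t (j+1) m - t j m * t (j+1) p.

Lemma alg (a0 a1 c0 c1 v0 v1 u0 u1 : Z) :
  c0*a1 - a0*c1 = 1 -> v0*u1 - v1*u0 = 1 ->
  (a0*v0 - c0*u0)*(a1*v1 - c1*u1) - 1 = (a0*v1 - c0*u1)*(a1*v0 - c1*u0).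
Proof.
  intros E1 E2.
  assert (H : (a0*v0 - c0*u0)*(a1*v1 - c1*u1) - 1 - (a0*v1 - c0*u1)*(a1*v0 - c1*u0)
              = (v0*u1 - v1*u0)*(c0*a1 - a0*c1) - 1) by ring.
  rewrite E1, E2 in H. lia.
Qed.

Lemma F1 t j p (Ht : SL2_tiling t) (H1 : t j p = 1) i :
  cc t j p i * t (i+1) p - t i p * cc t j p (i+1) = 1.
Proof.
  destruct Ht as [_ Hd]. unfold cc.
  transitivity (t j p * (t i p * t (i+1) (p+1) - t i (p+1) * t (i+1) p)); [ring|].
  rewrite Hd, H1; ring.
Qed.

Lemma F2 t j p (Ht : SL2_tiling t) (H1 : t j p = 1) m :
  t j m * uu t j p (m+1) - t j (m+1) * uu t j p m = 1.
Proof.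
  destruct Ht as [_ Hd]. unfold uu.
  transitivity (t j p * (t j m * t (j+1) (m+1) - t j (m+1) * t (j+1) m)); [ring|].
  rewrite Hd, H1; ring.
Qed.

Lemma F3 t j p (Ht : SL2_tiling t) (H1 : t j p = 1) :
  forall n k i m, i = j - Z.of_nat n -> m = p + Z.of_nat k ->
  t i m = t i p * t j m - cc t j p i * uu t j p m.
Proof.
  induction n as [|n IHn]; intros k i m Hi Hm.
  - subst i. simpl Z.of_nat. rewrite Z.sub_0_r. unfold cc. rewrite H1. ring.
  - induction k as [|k IHk] in i, m, Hi, Hm |- *.
    + subst m. rewrite Z.add_0_r. unfold uu. rewrite H1. ring.
    + assert (Ea := IHn (S k) (i+1) m ltac:(lia) Hm).
      assert (Eb := IHn k (i+1) (m-1) ltac:(lia) ltac:(lia)).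
      assert (Ec := IHk i (m-1) Hi ltac:(lia)).
      destruct Ht as [Hpos Hd].
      assert (D := Hd i (m-1)). replace (m-1+1) with m in D by ring.
      assert (P := Hpos (i+1) (m-1)).
      assert (E1 := F1 t j p (conj Hpos Hd) H1 i).
      assert (E2 := F2 t j p (conj Hpos Hd) H1 (m-1)). replace (m-1+1) with m in E2 by ring.
      pose proof (alg _ _ _ _ _ _ _ _ E1 E2) as A.
      rewrite <- Ec, <- Ea, <- Eb in A.
      apply (Z.mul_reg_r _ _ (t (i+1) (m-1))); [lia|].
      rewrite <- A. lia.
Qed.

Lemma Cpos t j p (Ht : SL2_tiling t) (H1 : t j p = 1) :
  forall n, 0 <= cc t j p (j - Z.of_nat n).
Proof.
  induction n as [|n IH].
  - unfold cc. rewrite Z.sub_0_r. lia.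
  - assert (E := F1 t j p Ht H1 (j - Z.of_nat (S n))).
    replace (j - Z.of_nat (S n) + 1) with (j - Z.of_nat n) in E by lia.
    destruct Ht as [Hpos _].
    assert (P1 := Hpos (j - Z.of_nat (S n)) p).
    assert (P2 := Hpos (j - Z.of_nat n) p). nia.
Qed.

Lemma Upos t j p (Ht : SL2_tiling t) (H1 : t j p = 1) :
  forall k, 0 <= uu t j p (p + Z.of_nat k).
Proof.
  induction k as [|k IH].
  - unfold uu. rewrite Z.add_0_r. lia.
  - assert (E := F2 t j p Ht H1 (p + Z.of_nat k)).
    replace (p + Z.of_nat k + 1) with (p + Z.of_nat (S k)) in E by lia.
    destruct Ht as [Hpos _].
    assert (P1 := Hpos j (p + Z.of_nat k)).
    assert (P2 := Hpos j (p + Z.of_nat (S k))). nia.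
Qed.

Lemma Cge1 t j p (Ht : SL2_tiling t) (H1 : t j p = 1) x :
  x < j -> 1 <= cc t j p x.
Proof.
  intros Hx.
  assert (E := F1 t j p Ht H1 x).
  assert (C := Cpos t j p Ht H1 (Z.to_nat (j - x - 1))).
  replace (j - Z.of_nat (Z.to_nat (j - x - 1))) with (x+1) in C by lia.
  destruct Ht as [Hpos _].
  assert (P1 := Hpos x p). assert (P2 := Hpos (x+1) p). nia.
Qed.

Lemma Uge1 t j p (Ht : SL2_tiling t) (H1 : t j p = 1) y :
  p < y -> 1 <= uu t j p y.
Proof.
  intros Hy.
  assert (E := F2 t j p Ht H1 (y-1)). replace (y-1+1) with y in E by ring.
  assert (C := Upos t j p Ht H1 (Z.to_nat (y - 1 - p))).
  replace (p + Z.of_nat (Z.to_nat (y - 1 - p))) with (y-1) in C by lia.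
  destruct Ht as [Hpos _].
  assert (P1 := Hpos j y). assert (P2 := Hpos j (y-1)). nia.
Qed.

Lemma CltA t j p (Ht : SL2_tiling t) (H1 : t j p = 1)
  (noA : forall i, i < j -> t i p <> 1) :
  forall n, cc t j p (j - Z.of_nat n) < t (j - Z.of_nat n) p.
Proof.
  induction n as [|n IH].
  - unfold cc. rewrite Z.sub_0_r. lia.
  - assert (E := F1 t j p Ht H1 (j - Z.of_nat (S n))).
    replace (j - Z.of_nat (S n) + 1) with (j - Z.of_nat n) in E by lia.
    assert (N := noA (j - Z.of_nat (S n)) ltac:(lia)).
    destruct Ht as [Hpos _].
    assert (P1 := Hpos (j - Z.of_nat (S n)) p).
    assert (P2 := Hpos (j - Z.of_nat n) p).
    set (a0 := t (j - Z.of_nat (S n)) p) in *.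
    set (a1 := t (j - Z.of_nat n) p) in *.
    set (c0 := cc t j p (j - Z.of_nat (S n))) in *.
    set (c1 := cc t j p (j - Z.of_nat n)) in *.
    destruct (Z_lt_le_dec c0 a0) as [|Hc]; [assumption|exfalso].
    assert (c0 * a1 >= a0 * a1) by nia.
    assert (a0 * (a1 - c1) >= a0) by nia.
    nia.
Qed.

Lemma UltV t j p (Ht : SL2_tiling t) (H1 : t j p = 1)
  (noV : forall m, p < m -> t j m <> 1) :
  forall k, uu t j p (p + Z.of_nat k) < t j (p + Z.of_nat k).
Proof.
  induction k as [|k IH].
  - unfold uu. rewrite Z.add_0_r. lia.
  - assert (E := F2 t j p Ht H1 (p + Z.of_nat k)).
    replace (p + Z.of_nat k + 1) with (p + Z.of_nat (S k)) in E by lia.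
    assert (N := noV (p + Z.of_nat (S k)) ltac:(lia)).
    destruct Ht as [Hpos _].
    assert (P1 := Hpos j (p + Z.of_nat k)).
    assert (P2 := Hpos j (p + Z.of_nat (S k))).
    set (v0 := t j (p + Z.of_nat k)) in *.
    set (v1 := t j (p + Z.of_nat (S k))) in *.
    set (u0 := uu t j p (p + Z.of_nat k)) in *.
    set (u1 := uu t j p (p + Z.of_nat (S k))) in *.
    destruct (Z_lt_le_dec u1 v1) as [|Hc]; [assumption|exfalso].
    assert (v0 * u1 >= v0 * v1) by nia.
    assert (v1 * (v0 - u0) >= v1) by nia.
    nia.
Qed.

Lemma formula t j p (Ht : SL2_tiling t) (H1 : t j p = 1) x y :
  x <= j -> p <= y -> t x y = t x p * t j y - cc t j p x * uu t j p y.
Proof.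
  intros Hx Hy.
  apply (F3 t j p Ht H1 (Z.to_nat (j - x)) (Z.to_nat (y - p))); lia.
Qed.

Lemma partI (t : Z -> Z -> Z) (j p : Z) :
  SL2_tiling t -> t j p = 1 ->
  (exists x y, x < j /\ p < y /\ t x y = 1) ->
     ((exists x, x < j /\ t x p = 1) \/ (exists y, p < y /\ t j y = 1)) /\
     ~ ((exists x, x < j /\ t x p = 1) /\ (exists y, p < y /\ t j y = 1)).
Proof.
  intros Ht H1 [x [y [Hx [Hy Hxy]]]]. split.
  - apply NNPP. intros Hn.
    assert (noA : forall i, i < j -> t i p <> 1) by (intros i Hi E; apply Hn; left; eauto).
    assert (noV : forall m, p < m -> t j m <> 1) by (intros m Hm E; apply Hn; right; eauto).
    assert (A := CltA t j p Ht H1 noA (Z.to_nat (j - x))).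
    replace (j - Z.of_nat (Z.to_nat (j - x))) with x in A by lia.
    assert (V := UltV t j p Ht H1 noV (Z.to_nat (y - p))).
    replace (p + Z.of_nat (Z.to_nat (y - p))) with y in V by lia.
    assert (C := Cge1 t j p Ht H1 x Hx).
    assert (U := Uge1 t j p Ht H1 y Hy).
    assert (F := formula t j p Ht H1 x y ltac:(lia) ltac:(lia)).
    rewrite Hxy in F. nia.
  - intros [[a [Ha Ea]] [b [Hb Eb]]].
    assert (F := formula t j p Ht H1 a b ltac:(lia) ltac:(lia)).
    rewrite Ea, Eb in F.
    assert (C := Cge1 t j p Ht H1 a Ha).
    assert (U := Uge1 t j p Ht H1 b Hb).
    destruct Ht as [Hpos _]. assert (P := Hpos a b). nia.
Qed.

Theorem proposition8p1 (t : Z -> Z -> Z) (j p : Z) :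
  SL2_tiling t -> t j p = 1 ->
  ((exists x y, x < j /\ p < y /\ t x y = 1) ->
     ((exists x, x < j /\ t x p = 1) \/ (exists y, p < y /\ t j y = 1)) /\
     ~ ((exists x, x < j /\ t x p = 1) /\ (exists y, p < y /\ t j y = 1))) /\
  ((exists x y, j < x /\ y < p /\ t x y = 1) ->
     ((exists x, j < x /\ t x p = 1) \/ (exists y, y < p /\ t j y = 1)) /\
     ~ ((exists x, j < x /\ t x p = 1) /\ (exists y, y < p /\ t j y = 1))).
Proof.
  intros Ht H1. split; [apply partI; auto|].
  set (t' := fun a b => t (- a) (- b)).
  assert (Ht' : SL2_tiling t').
  { destruct Ht as [Hpos Hd]. split; unfold t'; [intros; apply Hpos|].
    intros a b. assert (D := Hd (-a-1) (-b-1)).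
    replace (-a-1+1) with (-a) in D by ring. replace (-b-1+1) with (-b) in D by ring.
    replace (-(a+1)) with (-a-1) by ring. replace (-(b+1)) with (-b-1) by ring. lia. }
  assert (H1' : t' (-j) (-p) = 1) by (unfold t'; rewrite !Z.opp_involutive; auto).
  intros [x [y [Hx [Hy Hxy]]]].
  destruct (partI t' (-j) (-p) Ht' H1') as [Hex Hno].
  { exists (-x), (-y). unfold t'. rewrite !Z.opp_involutive. repeat split; lia. }
  split.
  - destruct Hex as [[a [Ha Ea]]|[b [Hb Eb]]]; unfold t' in *.
    + left. exists (-a). rewrite Z.opp_involutive in Ea. split; [lia|auto].
    + right. exists (-b). rewrite Z.opp_involutive in Eb. split; [lia|auto].
  - intros [[a [Ha Ea]] [b [Hb Eb]]]. apply Hno. unfold t'. split.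
    + exists (-a). rewrite !Z.opp_involutive. split; [lia|auto].
    + exists (-b). rewrite !Z.opp_involutive. split; [lia|auto].
Qed.
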